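(* In the biased planner's myopic problem described in the context, for every $b\in[0,1-p)$, $\pi^0_B(b)\in\{p,1-b\}$.
   Context: A binary state $\omega\in\{G,B\}$; for an agent with public belief $b$ and private signal precision $q\in[0.5,1]$ (signal matches $\omega$ with probability $q$), the action is the signal if $1-q\le b\le q$, $G$ if $b>q$, $B$ if $b<1-q$. Let $z(b,q)=b+q-2bq$. The biased planner has baseline precision $p\in[0.5,1)$, cost $\beta:[0,1]\to[0,\infty)$ non-negative, increasing, continuous, concave with $\beta(0)=0$, and $C>0$; its instantaneous reward is $r_B(b,q)=-\beta(|q-p|)-Cz(b,q)$ if $q\ge\max(b,1-b)$, $-\beta(|q-p|)-C$ if $b<1-q$, and $-\beta(|q-p|)$ if $b>q$. The myopic optimal precision $\pi^0_B(b)$ is a maximizer of $q\mapsto r_B(b,q)$ over $[0.5,1]$. *)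

(* Defs.v *)
From Stdlib Require Export Reals Lra.
Open Scope R_scope.

Definition z (b q : R) : R := b + q - 2 * b * q.

(* For q in [0.5,1] the three
   cases of the paper (b < 1-q ; b > q ; 1-q <= b <= q) are disjoint and
   exhaustive, so this case split agrees with the paper's definition. *)
Definition r_B (beta : R -> R) (p C b q : R) : R :=
  if Rlt_dec b (1 - q) then - beta (Rabs (q - p)) - C
  else if Rlt_dec q b then - beta (Rabs (q - p))
  else - beta (Rabs (q - p)) - C * z b q.

Definition cost_ok (beta : R -> R) : Prop :=
  beta 0 = 0 /\
  (forall x, 0 <= x <= 1 -> 0 <= beta x) /\
  (forall x y, 0 <= x <= 1 -> 0 <= y <= 1 -> x < y -> beta x < beta y) /\
  (forall x, 0 <= x <= 1 -> forall eps, 0 < eps -> exists delta, 0 < delta /\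
     forall y, 0 <= y <= 1 -> Rabs (y - x) < delta -> Rabs (beta y - beta x) < eps) /\
  (forall x y t, 0 <= x <= 1 -> 0 <= y <= 1 -> 0 <= t <= 1 ->
     t * beta x + (1 - t) * beta y <= beta (t * x + (1 - t) * y)).

Definition myopic_opt (beta : R -> R) (p C b q : R) : Prop :=
  1/2 <= q <= 1 /\
  forall q', 1/2 <= q' <= 1 -> r_B beta p C b q' <= r_B beta p C b q.

(* Main.v *)
Require Import Defs.
From Stdlib Require Import Reals.
Open Scope R_scope.

Theorem lemma11 (beta : R -> R) (p C b q : R) :
  1/2 <= p < 1 -> 0 < C -> cost_ok beta ->
  0 <= b < 1 - p ->
  myopic_opt beta p C b q ->
  q = p \/ q = 1 - b.
Proof.
  intros Hp HC [H0 [Hnn [Hinc _]]] Hb [Hq Hopt].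
  destruct (Rtotal_order q (1 - b)) as [Hlt | [Heq | Hgt]].
  - left.
    assert (Hp' := Hopt p ltac:(lra)).
    unfold r_B in Hp'.
    destruct (Rlt_dec b (1 - p)); [|lra].
    destruct (Rlt_dec b (1 - q)); [|lra].
    replace (p - p) with 0 in Hp' by ring.
    rewrite Rabs_R0, H0 in Hp'.
    destruct (Req_dec q p) as [E|N]; [exact E|exfalso].
    assert (0 < Rabs (q - p)) by (apply Rabs_pos_lt; lra).
    assert (Rabs (q - p) <= 1).
    { apply Rabs_le; lra. }
    assert (beta 0 < beta (Rabs (q - p))) by (apply Hinc; lra).
    lra.
  - right; exact Heq.
  - exfalso.
    assert (H1 := Hopt (1 - b) ltac:(lra)).
    unfold r_B in H1.
    destruct (Rlt_dec b (1 - (1 - b))); [lra|].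
    destruct (Rlt_dec (1 - b) b); [lra|].
    destruct (Rlt_dec b (1 - q)); [lra|].
    destruct (Rlt_dec q b); [lra|].
    rewrite (Rabs_right (1 - b - p)) in H1 by lra.
    rewrite (Rabs_right (q - p)) in H1 by lra.
    assert (beta (1 - b - p) < beta (q - p)) by (apply Hinc; lra).
    assert (z b (1 - b) <= z b q).
    { unfold z. assert (0 <= (q - (1 - b)) * (1 - 2 * b)) by (apply Rmult_le_pos; lra). nra. }
    nra.
Qed.
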